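(* Let $(G,\mathcal F_\bullet G,\mathfrak R)$ be a filtered Rota–Baxter group. Then for every $n\ge1$ the map $\mathfrak R_n:\mathsf{gr}_nG\to\mathsf{gr}_nG$, $\mathfrak R_n(\bar x)=\overline{\mathfrak R(x)}$ for $x\in\mathcal F_nG$, is well defined and is a group homomorphism of $\mathsf{gr}_nG$.
   Context: For a group $G$ write $(x,y)=xyx^{-1}y^{-1}$; for subgroups $H,K$, $(H,K)$ is the subgroup generated by such commutators with $x\in H,y\in K$. A filtered group $(G,\mathcal F_\bullet G)$ is a group with subgroups $G=\mathcal F_1G\supset\mathcal F_2G\supset\cdots$ such that $(\mathcal F_nG,\mathcal F_mG)\subset\mathcal F_{n+m}G$; then each $\mathcal F_nG$ is normal in $G$ and $\mathsf{gr}_nG=\mathcal F_nG/\mathcal F_{n+1}G$ is an abelian group, written additively ($\bar x+\bar y=\overline{xy}$). A Rota–Baxter group is a group with a map $\mathfrak R$ such that $\mathfrak R(g)\mathfrak R(h)=\mathfrak R(g\mathfrak R(g)h\mathfrak R(g)^{-1})$ for all $g,h$; a filtered Rota–Baxter group is a filtered group with such an $\mathfrak R$ satisfying $\mathfrak R(\mathcal F_nG)\subset\mathcal F_nG$ for all $n\ge1$. *)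

(* Defs.v *)
Record group : Type := Group {
  carrier :> Type;
  mul : carrier -> carrier -> carrier;
  inv : carrier -> carrier;
  one : carrier;
  mulA : forall x y z, mul x (mul y z) = mul (mul x y) z;
  mul1g : forall x, mul one x = x;
  mulg1 : forall x, mul x one = x;
  mulVg : forall x, mul (inv x) x = one;
  mulgV : forall x, mul x (inv x) = one
}.

Arguments mul {g}.
Arguments inv {g}.
Arguments one {g}.

Definition comm {G : group} (x y : G) : G :=
  mul (mul (mul x y) (inv x)) (inv y).

Definition is_subgroup {G : group} (H : G -> Prop) : Prop :=
  H one /\ (forall x y, H x -> H y -> H (mul x y)) /\ (forall x, H x -> H (inv x)).

Definition comm_subgroup {G : group} (H K : G -> Prop) (z : G) : Prop :=
  forall L : G -> Prop, is_subgroup L ->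
    (forall x y, H x -> K y -> L (comm x y)) -> L z.

(* A filtration F_1 = G ⊃ F_2 ⊃ ... by subgroups with (F_n,F_m) ⊂ F_{n+m}.
   Only indices n >= 1 are meaningful; F 0 is unconstrained. *)
Definition is_filtration {G : group} (F : nat -> G -> Prop) : Prop :=
  (forall x : G, F 1 x) /\
  (forall n, 1 <= n -> is_subgroup (F n)) /\
  (forall n x, 1 <= n -> F (S n) x -> F n x) /\
  (forall n m z, 1 <= n -> 1 <= m -> comm_subgroup (F n) (F m) z -> F (n + m) z).

Definition is_RotaBaxter {G : group} (R : G -> G) : Prop :=
  forall g h : G, mul (R g) (R h) = R (mul (mul (mul g (R g)) h) (inv (R g))).

Definition is_filtered_RotaBaxter {G : group} (F : nat -> G -> Prop) (R : G -> G) : Prop :=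
  is_filtration F /\ is_RotaBaxter R /\
  (forall n x, 1 <= n -> F n x -> F n (R x)).

(* Equality in gr_n G = F_n / F_{n+1}: for x, y in F_n,
   xbar = ybar  iff  x y^{-1} ∈ F_{n+1}. Addition in gr_n: xbar + ybar = (xy)bar. *)
Definition gr_eq {G : group} (F : nat -> G -> Prop) (n : nat) (x y : G) : Prop :=
  F (S n) (mul x (inv y)).

(* Main.v *)
Require Import Defs.
From Stdlib Require Import PeanoNat.
From Corelib Require Import ssreflect.

Section Aux.
Variable G : group.
Implicit Types x y z : G.

Lemma mulKg x y : mul x (mul (inv x) y) = y.
Proof. by rewrite mulA mulgV mul1g. Qed.
Lemma mulVKg x y : mul (inv x) (mul x y) = y.
Proof. by rewrite mulA mulVg mul1g. Qed.
Lemma inv_uniq x y : mul x y = one -> inv x = y.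
Proof. move=> h. by rewrite -[inv x]mulg1 -h mulVKg. Qed.
Lemma invK x : inv (inv x) = x.
Proof. apply: inv_uniq. apply: mulVg. Qed.
Lemma invM x y : inv (mul x y) = mul (inv y) (inv x).
Proof. apply: inv_uniq. by rewrite -mulA mulKg mulgV. Qed.
Lemma inv1 : inv (@one G) = one.
Proof. apply: inv_uniq. apply: mul1g. Qed.
End Aux.

Ltac gsimpl := repeat (rewrite ?invM ?invK ?inv1 -?mulA ?mulKg ?mulVKg ?mul1g ?mulg1 ?mulgV ?mulVg).

Theorem proposition5p10 (G : group) (F : nat -> G -> Prop) (R : G -> G)
  (HFR : is_filtered_RotaBaxter F R) (n : nat) (hn : 1 <= n) :
  (* R_n lands in gr_n and is well defined on classes *)
  (forall x, F n x -> F n (R x)) /\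
  (forall x y, F n x -> F n y -> gr_eq F n x y -> gr_eq F n (R x) (R y)) /\
  (* R_n (xbar + ybar) = R_n xbar + R_n ybar *)
  (forall x y, F n x -> F n y -> gr_eq F n (R (mul x y)) (mul (R x) (R y))).
Proof.
  destruct HFR as [[F1 [Fsub [Fdown Fcomm]]] [RB RF]].
  have commF : forall m g y, 1 <= m -> F m y -> F (S m) (comm g y).
  { move=> m g y hm hy. apply: (Fcomm 1 m) => //.
    move=> L _ HL. by apply: HL; [apply: F1|]. }
  have normal : forall m g c, 1 <= m -> F m c -> F m (mul (mul g c) (inv g)).
  { move=> m g c hm hc.
    have -> : mul (mul g c) (inv g) = mul (comm g c) c by rewrite /comm; gsimpl.
    destruct (Fsub m hm) as [_ [HM _]]. apply: HM => //.
    apply: Fdown => //. by apply: commF. }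
  have L : forall m a c, 1 <= m -> F m c -> F m (mul (R (mul a c)) (inv (R a))).
  { move=> m a c hm hc.
    pose h := mul (mul (inv (R a)) c) (R a).
    have hh : F m h.
    { rewrite /h. have := normal m (inv (R a)) c hm hc. by rewrite invK. }
    have e := RB a h.
    have E : mul (mul (mul a (R a)) h) (inv (R a)) = mul a c.
    { rewrite /h; gsimpl. reflexivity. }
    rewrite E in e.
    rewrite -e. apply: normal => //. by apply: RF. }
  have hn1 : 1 <= S n by auto.
  destruct (Fsub (S n) hn1) as [_ [HM HI]].
  split; [|split].
  - move=> x hx. by apply: RF.
  - move=> x y hx hy hxy. rewrite /gr_eq.
    have -> : x = mul y (mul (inv y) x) by gsimpl.
    apply: L => //.
    have := normal (S n) (inv y) (mul x (inv y)) hn1 hxy. rewrite invK.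
    by gsimpl.
  - move=> x y hx hy. rewrite /gr_eq.
    rewrite RB.
    have -> : mul (mul (mul x (R x)) y) (inv (R x))
      = mul (mul x y) (comm (inv y) (R x)) by rewrite /comm; gsimpl.
    have hk : F (S n) (comm (inv y) (R x)).
    { rewrite -PeanoNat.Nat.add_1_r. apply: (Fcomm n 1) => //.
      move=> L0 _ HL. apply: HL; last by apply: F1.
      destruct (Fsub n hn) as [_ [_ HIn]]. by apply: HIn. }
    have := HI _ (L (S n) (mul x y) _ hn1 hk). by gsimpl.
Qed.
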